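(* Let $N\ge1$ and $0\le k<N$ be integers, let $q,z_0\in\mathbb{C}^\times$, and fix choices of $z_0^{1/N}$ and $q^{1/N^2}$, writing $q^{a/N^2}:=(q^{1/N^2})^a$ for $a\in\mathbb{Z}$. For $(n,m)\in\mathbb{Z}^2$ put $l_{n,m}=kn-Nm$. Let $\tau:\mathbb{Z}^2\to\mathbb{C}^\times$, $(n,m)\mapsto\tau_{(n,m)}$, satisfy $$\tau_{(n,m+1)}\tau_{(n,m-1)}=\tau_{(n,m)}^2+z_0^{1/N}q^{l_{n,m}/N^2}\tau_{(n+1,m)}\tau_{(n-1,m)}\quad\text{for all }(n,m)\in\mathbb{Z}^2,$$ together with $\tau_{(n+N,m+k)}=\tau_{(n,m)}$. Define $$x_{(n,m)}=z_0^{1/N}q^{(l_{n,m}+N)/N^2}\,\tau_{(n-1,m-1)}\tau_{(n+1,m-1)}\tau_{(n,m-1)}^{-2}.$$ Then for all $(n,m)$, $$\frac{x_{(n,m+1)}x_{(n,m-1)}}{x_{(n,m)}^2}=\frac{(1+x_{(n+1,m)})(1+x_{(n-1,m)})}{(1+x_{(n,m)})^2}$$ (whenever the right-hand side is defined) and $x_{(n,m)}=x_{(n+N,m+k)}$. *)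

(* Defs.v *)
From mathcomp Require Import all_boot all_algebra.
From mathcomp Require Import complex.
From mathcomp Require Import Rstruct.
Set Implicit Arguments. Unset Strict Implicit. Unset Printing Implicit Defensive.
Import GRing.Theory Num.Theory.
Local Open Scope ring_scope.

Definition CC : numClosedFieldType := (Rdefinitions.R)[i].

Definition lnm (N k : nat) (n m : int) : int := (k%:Z * n - N%:Z * m)%R.

(* x_{(n,m)} = z0^{1/N} q^{(l_{n,m}+N)/N^2} tau(n-1,m-1) tau(n+1,m-1) tau(n,m-1)^{-2},
   where zN = z0^{1/N}, qN2 = q^{1/N^2} and q^{a/N^2} := qN2 ^ a (integer power). *)
Definition xvar (N k : nat) (zN qN2 : CC) (tau : int -> int -> CC) (n m : int) : CC :=
  zN * qN2 ^ (lnm N k n m + N%:Z) * tau (n - 1) (m - 1) * tau (n + 1) (m - 1)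
  / (tau n (m - 1)) ^+ 2.

(* Main.v *)
Require Import Defs.
From mathcomp Require Import all_boot all_algebra.
From mathcomp Require Import complex.
From mathcomp Require Import Rstruct.
From mathcomp Require Import ring.
Import GRing.Theory Num.Theory.
Local Open Scope ring_scope.

Theorem lemma2p8 (N k : nat) (q z0 zN qN2 : CC) (tau : int -> int -> CC)
  (hN : (1 <= N)%N) (hk : (k < N)%N)
  (hq : q != 0) (hz0 : z0 != 0)
  (hzN : zN ^+ N = z0) (hqN2 : qN2 ^+ (N * N) = q)
  (htau0 : forall n m, tau n m != 0)
  (hrec : forall n m : int,
     tau n (m + 1) * tau n (m - 1)
     = tau n m ^+ 2 + zN * qN2 ^ (lnm N k n m) * tau (n + 1) m * tau (n - 1) m)
  (hper : forall n m : int, tau (n + N%:Z) (m + k%:Z) = tau n m) :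
  (forall n m : int, 1 + xvar N k zN qN2 tau n m != 0 ->
     xvar N k zN qN2 tau n (m + 1) * xvar N k zN qN2 tau n (m - 1)
       / xvar N k zN qN2 tau n m ^+ 2
     = (1 + xvar N k zN qN2 tau (n + 1) m) * (1 + xvar N k zN qN2 tau (n - 1) m)
       / (1 + xvar N k zN qN2 tau n m) ^+ 2)
  /\ (forall n m : int,
     xvar N k zN qN2 tau n m = xvar N k zN qN2 tau (n + N%:Z) (m + k%:Z)).
Proof.
have qn0 : qN2 != 0.
  by apply: contraNneq hq => H; rewrite -hqN2 H expr0n muln_eq0 orbb eqn0Ngt hN.
have zn0 : zN != 0.
  by apply: contraNneq hz0 => H; rewrite -hzN H expr0n eqn0Ngt hN.
have lS : forall n m, lnm N k n (m - 1) = lnm N k n m + N%:Z.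
  by move=> n m; rewrite /lnm; ring.
have onex : forall n m, 1 + xvar N k zN qN2 tau n m
    = tau n m * tau n (m - 1 - 1) / tau n (m - 1) ^+ 2.
  move=> n m; have := hrec n (m - 1); rewrite subrK lS => ->.
  rewrite /xvar; field; exact: htau0.
split; last first.
  move=> n m; rewrite /xvar.
  have -> : lnm N k (n + N%:Z) (m + k%:Z) = lnm N k n m by rewrite /lnm; ring.
  have -> : n + N%:Z - 1 = (n - 1) + N%:Z by ring.
  have -> : n + N%:Z + 1 = (n + 1) + N%:Z by ring.
  have -> : m + k%:Z - 1 = (m - 1) + k%:Z by ring.
  by rewrite !hper.
move=> n m _.
rewrite !onex /xvar.
have -> : lnm N k n (m + 1) + N%:Z = lnm N k n m by rewrite /lnm; ring.
rewrite lS !expfzDr // addrK.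
field.
by rewrite !htau0 !expfz_neq0.
Qed.
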